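(* Let $\alpha=\beta\otimes\gamma:A^{\Delta}\to(H,V)\circ(H',V')$ be a homomorphism, where $(H,V),(H',V')$ are finite forest algebras with idempotent and commutative horizontal monoids, $\beta:A^{\Delta}\to(H,V)$ is nonconfusing, and $\gamma:(A\times H)^{\Delta}\to(H',V')$ is 1-definite. Then $\alpha$ is nonconfusing.
   Context: $A^{\Delta}$: free forest algebra of forests (finite ordered sequences of finite ordered labelled trees, under concatenation) and contexts (forests with one hole) over $A$. Forest algebra: additive monoid $H$, monoid $V$ acting faithfully on the left, containing $g\mapsto g+h$, $g\mapsto h+g$. Wreath product $(H,V)\circ(H',V')=(H\times H',V\times V'^{H})$ with $(v,f)(h,h')=(vh,f(h)h')$; $\beta\otimes\gamma$ maps $a$ to $(\beta(a),h\mapsto\gamma(a,h))$, so $\beta\otimes\gamma(s)=(\beta(s),\gamma(s^\beta))$ with $s^\beta$ relabeling each node with subtree $at$ by $(a,\beta(t))$. $\gamma$ is 1-definite if $\gamma(s)$ depends only on the set of labels of the root nodes of $s$. Reachability: $h\le h'$ iff $h=vh'$ for some $v$; classes of mutual reachability. For a homomorphism $\delta$ and class $\Gamma$, $\delta_\Gamma$ is the quotient identifying $\{h:h\not>\Gamma\}$ to one absorbing $\infty$; $s^{\delta_\Gamma}$ relabels nodes with subtree $at$ by $(a,\delta_\Gamma(t))$. $\sim_k$ on forests over an alphabet $B$: $\sim_0$ total; $s\sim_{k+1}s'$ iff the sets $\{(b_i,[s_i]_{\sim_k})\}$ for $s=\sum b_is_i$ and for $s'$ coincide. $s_1\equiv_{\delta,k,\Gamma}s_2$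 iff $(s_1)^{\delta_\Gamma}\sim_k(s_2)^{\delta_\Gamma}$ and $\delta(s_1),\delta(s_2)\in\Gamma$. $\delta$ is nonconfusing if there is $k>0$ such that for every reachability class $\Gamma$ of its target, $s_1\equiv_{\delta,k,\Gamma}s_2$ implies $\delta(s_1)=\delta(s_2)$. *)

(* Defs.v *)
From HB Require Import structures.
From mathcomp Require Import all_boot.
From Stdlib Require List.
Set Implicit Arguments. Unset Strict Implicit. Unset Printing Implicit Defensive.

Record forest_algebra := ForestAlgebra {
  fa_H : finType;
  fa_V : finType;
  fa_add : fa_H -> fa_H -> fa_H;
  fa_zero : fa_H;
  fa_mul : fa_V -> fa_V -> fa_V;
  fa_one : fa_V;
  fa_act : fa_V -> fa_H -> fa_H;
  fa_addA : forall x y z, fa_add x (fa_add y z) = fa_add (fa_add x y) z;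
  fa_add0h : forall x, fa_add fa_zero x = x;
  fa_addh0 : forall x, fa_add x fa_zero = x;
  fa_mulA : forall u v w, fa_mul u (fa_mul v w) = fa_mul (fa_mul u v) w;
  fa_mul1v : forall v, fa_mul fa_one v = v;
  fa_mulv1 : forall v, fa_mul v fa_one = v;
  fa_actM : forall v w h, fa_act (fa_mul v w) h = fa_act v (fa_act w h);
  fa_act1 : forall h, fa_act fa_one h = h;
  fa_faithful : forall v w, (forall h, fa_act v h = fa_act w h) -> v = w;
  fa_addl : forall h, exists v, forall g, fa_act v g = fa_add g h;
  fa_addr : forall h, exists v, forall g, fa_act v g = fa_add h g
}.

Definition hidem (B : forest_algebra) := forall h : fa_H B, fa_add h h = h.
Definition hcomm (B : forest_algebra) :=
  forall h h' : fa_H B, fa_add h h' = fa_add h' h.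

(** * Wreath product (H,V) o (H',V') = (H x H', V x V'^H),
    (v,f)(h,h') = (vh, f(h)h'). *)
Section Wreath.
Variables B C : forest_algebra.

Definition wr_H : finType := (fa_H B * fa_H C)%type.
Definition wr_V : finType := (fa_V B * {ffun fa_H B -> fa_V C})%type.
Definition wr_add (x y : wr_H) : wr_H := (fa_add x.1 y.1, fa_add x.2 y.2).
Definition wr_zero : wr_H := (fa_zero B, fa_zero C).
Definition wr_act (v : wr_V) (x : wr_H) : wr_H := (fa_act v.1 x.1, fa_act (v.2 x.1) x.2).
Definition wr_mul (v w : wr_V) : wr_V :=
  (fa_mul v.1 w.1, [ffun h => fa_mul (v.2 (fa_act w.1 h)) (w.2 h)]).
Definition wr_one : wr_V := (fa_one B, [ffun _ => fa_one C]).

Lemma wr_addA x y z : wr_add x (wr_add y z) = wr_add (wr_add x y) z.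
Proof. by rewrite /wr_add /= !fa_addA. Qed.
Lemma wr_add0h x : wr_add wr_zero x = x.
Proof. by case: x => a b; rewrite /wr_add /= !fa_add0h. Qed.
Lemma wr_addh0 x : wr_add x wr_zero = x.
Proof. by case: x => a b; rewrite /wr_add /= !fa_addh0. Qed.
Lemma wr_mulA u v w : wr_mul u (wr_mul v w) = wr_mul (wr_mul u v) w.
Proof.
rewrite /wr_mul /= fa_mulA; congr pair; apply/ffunP => h; rewrite !ffunE.
by rewrite fa_actM fa_mulA.
Qed.
Lemma wr_mul1v v : wr_mul wr_one v = v.
Proof.
case: v => a f; rewrite /wr_mul /= fa_mul1v; congr pair.
by apply/ffunP => h; rewrite !ffunE fa_mul1v.
Qed.
Lemma wr_mulv1 v : wr_mul v wr_one = v.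
Proof.
case: v => a f; rewrite /wr_mul /= fa_mulv1; congr pair.
by apply/ffunP => h; rewrite !ffunE fa_act1 fa_mulv1.
Qed.
Lemma wr_actM v w x : wr_act (wr_mul v w) x = wr_act v (wr_act w x).
Proof. by rewrite /wr_act /wr_mul /= ffunE !fa_actM. Qed.
Lemma wr_act1 x : wr_act wr_one x = x.
Proof. by case: x => a b; rewrite /wr_act /= ffunE !fa_act1. Qed.
Lemma wr_faithful v w : (forall x, wr_act v x = wr_act w x) -> v = w.
Proof.
case: v => v f; case: w => w g /= E.
have E1 : v = w.
  apply: fa_faithful => h.
  by have := E (h, fa_zero C); rewrite /wr_act /= => -[].
subst w; congr pair; apply/ffunP => h; apply: fa_faithful => h'.
by have := E (h, h'); rewrite /wr_act /= => -[].
Qed.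
Lemma wr_addl x : exists v, forall y, wr_act v y = wr_add y x.
Proof.
case: (fa_addl x.1) => v Hv; case: (fa_addl x.2) => v' Hv'.
by exists (v, [ffun _ => v']) => y; rewrite /wr_act /wr_add /= ffunE Hv Hv'.
Qed.
Lemma wr_addr x : exists v, forall y, wr_act v y = wr_add x y.
Proof.
case: (fa_addr x.1) => v Hv; case: (fa_addr x.2) => v' Hv'.
by exists (v, [ffun _ => v']) => y; rewrite /wr_act /wr_add /= ffunE Hv Hv'.
Qed.

Definition wreath : forest_algebra :=
  @ForestAlgebra wr_H wr_V wr_add wr_zero wr_mul wr_one wr_act
    wr_addA wr_add0h wr_addh0 wr_mulA wr_mul1v wr_mulv1 wr_actM wr_act1
    wr_faithful wr_addl wr_addr.
End Wreath.

(** The free forest algebra A^Delta is generated by the contexts a[] (a in A),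
    so a homomorphism A^Delta -> (H,V) is uniquely determined by (and given as)
    the images of the generators a[] : a map [g : A -> V]; its value on
    forests is [eval g] : eval (a t) = g(a) . eval t, eval (s + s') = eval s + eval s',
    eval 0 = 0. *)
Inductive tree (A : Type) : Type := Node of A & seq (tree A).
Definition forest (A : Type) := seq (tree A).

Section Eval.
Variables (A : Type) (B : forest_algebra) (g : A -> fa_V B).
Fixpoint eval_tree (t : tree A) : fa_H B :=
  let: Node a ts := t in
  fa_act (g a)
    ((fix ef (ts : seq (tree A)) : fa_H B :=
        if ts is t :: ts' then fa_add (eval_tree t) (ef ts') else fa_zero B) ts).
Definition eval (s : forest A) : fa_H B :=
  foldr (fun t acc => fa_add (eval_tree t) acc) (fa_zero B) s.
End Eval.

Definition tensor (A : Type) (B C : forest_algebra)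
  (beta : A -> fa_V B) (gamma : A * fa_H B -> fa_V C) : A -> fa_V (wreath B C) :=
  fun a => (beta a, [ffun h => gamma (a, h)]).

Definition reach (B : forest_algebra) (h h' : fa_H B) : bool :=
  [exists v, h == fa_act v h'].
Definition in_class (B : forest_algebra) (e h : fa_H B) : bool :=
  reach h e && reach e h.
Definition above_class (B : forest_algebra) (e h : fa_H B) : bool :=
  reach e h && ~~ reach h e.

(** delta_Gamma : values not > Gamma are identified to one absorbing element
    infinity, encoded as [None]; the other values h are encoded as [Some h]. *)
Definition quot_val (B : forest_algebra) (e h : fa_H B) : option (fa_H B) :=
  if above_class e h then Some h else None.

Section Relab.
Variables (A : Type) (B : forest_algebra) (g : A -> fa_V B) (e : fa_H B).
Fixpoint relab_tree (t : tree A) : tree (A * option (fa_H B)) :=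
  let: Node a ts := t in Node (a, quot_val e (eval g ts)) (map relab_tree ts).
Definition relab (s : forest A) : forest (A * option (fa_H B)) := map relab_tree s.
End Relab.

Fixpoint simk (B : Type) (k : nat) (s s' : forest B) : Prop :=
  match k with
  | 0 => True
  | k'.+1 =>
      (forall b c, List.In (Node b c) s ->
         exists c', List.In (Node b c') s' /\ simk k' c c') /\
      (forall b c', List.In (Node b c') s' ->
         exists c, List.In (Node b c) s /\ simk k' c c')
  end.

Definition equivk (A : Type) (B : forest_algebra) (g : A -> fa_V B) (k : nat)
  (e : fa_H B) (s1 s2 : forest A) : Prop :=
  simk k (relab g e s1) (relab g e s2) /\
  in_class e (eval g s1) /\ in_class e (eval g s2).

Definition nonconfusing (A : Type) (B : forest_algebra) (g : A -> fa_V B) : Prop :=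
  exists k, 0 < k /\
    forall (e : fa_H B) (s1 s2 : forest A),
      equivk g k e s1 s2 -> eval g s1 = eval g s2.

Definition one_definite (A : Type) (B : forest_algebra) (g : A -> fa_V B) : Prop :=
  forall s s' : forest A,
    (forall a, (exists c, List.In (Node a c) s) <-> (exists c, List.In (Node a c) s')) ->
    eval g s = eval g s'.

(* Main.v *)
Require Import Defs.
From mathcomp Require Import all_boot.
From Stdlib Require List.
Set Implicit Arguments. Unset Strict Implicit. Unset Printing Implicit Defensive.
Definition tree_ind' (X : Type) (P : tree X -> Prop)
  (H : forall a ts, (forall t, List.In t ts -> P t) -> P (Node a ts)) :
  forall t, P t :=
  fix IH t := match t with Node a ts => H a ts
   ((fix F (ts : seq (tree X)) : forall u, List.In u ts -> P u :=
      match ts with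
      | nil => fun u hu => False_ind _ hu
      | t0 :: ts' => fun u hu => match hu with
          | or_introl e => eq_ind t0 P (IH t0) u e
          | or_intror h => F ts' u h end
      end) ts) end.

Fixpoint mapt (X Y : Type) (f : X -> Y) (t : tree X) : tree Y :=
  let: Node a ts := t in Node (f a) (map (mapt f) ts).

Lemma simk_map (X Y : Type) (f : X -> Y) k (x y : forest X) :
  simk k x y -> simk k (map (mapt f) x) (map (mapt f) y).
Proof.
elim: k x y => [//|k IH] x y /= [Hl Hr]; split.
- move=> b c /List.in_map_iff [[b0 c0] [[<- <-] Hin]].
  have [c' [Hc' Hs]] := Hl _ _ Hin.
  exists (map (mapt f) c'); split; last exact: IH.
  by apply: (List.in_map (mapt f) _ (Node b0 c')).
- move=> b c /List.in_map_iff [[b0 c0] [[<- <-] Hin]].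
  have [c' [Hc' Hs]] := Hr _ _ Hin.
  exists (map (mapt f) c'); split; last exact: IH.
  by apply: (List.in_map (mapt f) _ (Node b0 c')).
Qed.

Lemma simk_mono (X : Type) k (x y : forest X) : simk k.+1 x y -> simk k x y.
Proof.
elim: k x y => [//|k IH] x y /= [Hl Hr]; split.
- move=> b c Hin; have [c' [? ?]] := Hl _ _ Hin; exists c'; split => //; exact: IH.
- move=> b c Hin; have [c' [? ?]] := Hr _ _ Hin; exists c'; split => //; exact: IH.
Qed.

Lemma simk_sym (X : Type) k (x y : forest X) : simk k x y -> simk k y x.
Proof.
elim: k x y => [//|k IH] x y /= [Hl Hr]; split.
- move=> b c Hin; have [c' [? ?]] := Hr _ _ Hin; exists c'; split => //; exact: IH.
- move=> b c Hin; have [c' [? ?]] := Hl _ _ Hin; exists c'; split => //; exact: IH.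
Qed.

Section R.
Variable B : forest_algebra.
Lemma reachP (h h' : fa_H B) : reflect (exists v, h = fa_act v h') (reach h h').
Proof.
apply: (iffP existsP) => [[v /eqP]|[v ->]]; [by exists v | by exists v].
Qed.
Lemma reach_trans (x y z : fa_H B) : reach x y -> reach y z -> reach x z.
Proof.
move=> /reachP [v ->] /reachP [w ->]; apply/reachP; exists (fa_mul v w).
by rewrite fa_actM.
Qed.
Lemma reach_refl (x : fa_H B) : reach x x.
Proof. by apply/reachP; exists (fa_one B); rewrite fa_act1. Qed.

Variables (X : Type) (g : X -> fa_V B).
Lemma eval_node a ts : eval_tree g (Node a ts) = fa_act (g a) (eval g ts).
Proof. rewrite /=; congr fa_act; by elim: ts => //= t ts ->. Qed.
Lemma eval_cons t ts : eval g (t :: ts) = fa_add (eval_tree g t) (eval g ts).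
Proof. by []. Qed.
Lemma reach_mem s t : List.In t s -> reach (eval g s) (eval_tree g t).
Proof.
elim: s => [//|t0 s IH] /= [<-|Hin].
- have [v Hv] := fa_addl (eval g s); apply/reachP; exists v; by rewrite Hv.
- apply: reach_trans (IH Hin).
  have [v Hv] := fa_addr (eval_tree g t0); apply/reachP; exists v; by rewrite Hv.
Qed.
Lemma reach_node a ts : reach (eval_tree g (Node a ts)) (eval g ts).
Proof. by rewrite eval_node; apply/reachP; exists (g a). Qed.
End R.
Section W.
Variables (A : finType) (B C : forest_algebra)
  (beta : A -> fa_V B) (gamma : A * fa_H B -> fa_V C).
Notation tens := (tensor beta gamma).
Notation W := (wreath B C).

Fixpoint brelab (t : tree A) : tree (A * fa_H B) :=
  let: Node a ts := t in Node (a, eval beta ts) (map brelab ts).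

Lemma eval_pair_tree t :
  eval_tree tens t = (eval_tree beta t, eval_tree gamma (brelab t)) :> wr_H B C.
Proof.
elim/tree_ind': t => a ts IH.
rewrite /brelab -/brelab !eval_node.
have -> : eval tens ts = (eval beta ts, eval gamma (map brelab ts)) :> wr_H B C.
  elim: ts IH => [//|t ts IHs] IH.
  rewrite [eval tens _]eval_cons [eval beta _]eval_cons map_cons [eval gamma _]eval_cons.
  rewrite IH; last by left.
  rewrite IHs // => u Hu; apply: IH; by right.
by rewrite /= /wr_act /= /tensor /= ffunE.
Qed.

Lemma eval_pair s :
  eval tens s = (eval beta s, eval gamma (map brelab s)) :> wr_H B C.
Proof.
elim: s => [//|t s IH].
rewrite [eval tens _]eval_cons [eval beta _]eval_cons map_cons [eval gamma _]eval_cons.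
by rewrite IH eval_pair_tree.
Qed.

Lemma reach_fst (h h' : fa_H W) : reach h h' -> reach (B:=B) h.1 h'.1.
Proof. by move=> /reachP [v ->]; apply/reachP; exists v.1. Qed.

Definition Fl (e1 : fa_H B) (p : A * option (fa_H W)) : A * option (fa_H B) :=
  (p.1, match p.2 with Some x => quot_val e1 x.1 | None => None end).

Lemma relab_tree_corr (e : fa_H W) t :
  reach e (eval_tree tens t) ->
  mapt (Fl e.1) (relab_tree tens e t) = relab_tree beta e.1 t.
Proof.
elim/tree_ind': t => a ts IH He.
have Hts : reach e (eval tens ts) := reach_trans He (reach_node _ _ _).
rewrite /= /Fl /=; congr Node.
- congr pair; rewrite /quot_val.
  case Ha: (above_class e (eval tens ts)).
  + by rewrite eval_pair.
  + move: Ha; rewrite /above_class Hts /= => /negbFE /reach_fst.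
    by rewrite eval_pair /= => ->; rewrite andbF.
- have Hu : forall u, List.In u ts ->
      mapt (Fl e.1) (relab_tree tens e u) = relab_tree beta e.1 u.
    by move=> u Hu; apply: IH => //; apply: reach_trans Hts (reach_mem _ Hu).
  elim: ts {IH He Hts} Hu => [//|t ts IHs] Hu /=.
  rewrite Hu; last by left.
  by rewrite IHs // => u Hin; apply: Hu; right.
Qed.

Lemma relab_corr (e : fa_H W) s :
  reach e (eval tens s) ->
  map (mapt (Fl e.1)) (relab tens e s) = relab beta e.1 s.
Proof.
move=> Hs; rewrite /relab.
have Hu : forall u, List.In u s ->
    mapt (Fl e.1) (relab_tree tens e u) = relab_tree beta e.1 u.
  by move=> u Hu; apply: relab_tree_corr; apply: reach_trans Hs (reach_mem _ Hu).
elim: s {Hs} Hu => [//|t s IHs] Hu /=.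
rewrite Hu; last by left.
by rewrite IHs // => u Hin; apply: Hu; right.
Qed.

Lemma in_class_fst (e h : fa_H W) : in_class e h -> in_class (B:=B) e.1 h.1.
Proof. by case/andP => /reach_fst H1 /reach_fst H2; apply/andP. Qed.

Lemma equivk_fst k (e : fa_H W) s1 s2 :
  equivk tens k e s1 s2 -> equivk beta k e.1 s1 s2.
Proof.
move=> [Hs [H1 H2]]; split; last split.
- rewrite -!relab_corr; first exact: simk_map.
  + by case/andP: H2.
  + by case/andP: H1.
- by move: (in_class_fst H1); rewrite eval_pair.
- by move: (in_class_fst H2); rewrite eval_pair.
Qed.

Lemma equivk_sym (X : Type) (D : forest_algebra) (g : X -> fa_V D) k e s1 s2 :
  equivk g k e s1 s2 -> equivk g k e s2 s1.
Proof. by move=> [Hs [H1 H2]]; split; [apply: simk_sym|split]. Qed.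

Lemma roots_dir k (e : fa_H W) s1 s2 :
  (forall s1 s2, equivk beta k e.1 s1 s2 -> eval beta s1 = eval beta s2) ->
  equivk tens k.+1 e s1 s2 ->
  forall lab c, List.In (Node lab c) (map brelab s1) ->
    exists c', List.In (Node lab c') (map brelab s2).
Proof.
move=> Hb [Hs [H1 H2]] lab c /List.in_map_iff [[a ts] [[<- _] Hin]].
have Hr1 : reach e (eval tens ts).
  apply: reach_trans (reach_node _ a ts).
  by apply: reach_trans (reach_mem _ Hin); case/andP: H1.
move: Hs => /= [Hl _].
have Hin' : List.In (relab_tree tens e (Node a ts)) (relab tens e s1)
  by apply: List.in_map.
have [c' [Hc' Hsim]] := Hl _ _ Hin'.
move: Hc' => /List.in_map_iff [[a' ts'] [[Ea Eq Ec] Hin2]].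
subst a'.
have Hr2 : reach e (eval tens ts').
  apply: reach_trans (reach_node _ a ts').
  by apply: reach_trans (reach_mem _ Hin2); case/andP: H2.
exists (map brelab ts').
suff -> : eval beta ts = eval beta ts'.
  by apply: (List.in_map brelab _ (Node a ts')).
move: Eq; rewrite /quot_val.
case Ha: (above_class e (eval tens ts)); case Ha': (above_class e (eval tens ts')) => //.
- by move=> [/(congr1 fst)]; rewrite !eval_pair.
- move=> _; apply: Hb; apply: (@equivk_fst k e ts ts'); split; last split.
  + by rewrite /relab Ec.
  + by move: Ha; rewrite /above_class /in_class Hr1 andbT /= => /negbFE.
  + by move: Ha'; rewrite /above_class /in_class Hr2 andbT /= => /negbFE.
Qed.
End W.

Theorem lemma8 (A : finType) (B C : forest_algebra)
  (beta : A -> fa_V B) (gamma : A * fa_H B -> fa_V C) :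
  hidem B -> hcomm B -> hidem C -> hcomm C ->
  nonconfusing beta -> one_definite gamma ->
  nonconfusing (tensor beta gamma).
Proof.
move=> _ _ _ _ [k [k0 Hb]] Hg; exists k.+1; split => // e s1 s2 Heq.
have Heqk : equivk (tensor beta gamma) k e s1 s2.
  by case: Heq => [Hs Hc]; split => //; apply: simk_mono.
have Hb' : forall s1 s2, equivk beta k e.1 s1 s2 -> eval beta s1 = eval beta s2.
  by move=> ? ?; apply: Hb.
rewrite !eval_pair; congr pair.
- exact/Hb/(equivk_fst Heqk).
- apply: Hg => lab; split => -[c Hc].
  + exact: roots_dir Hb' Heq _ _ Hc.
  + exact: roots_dir Hb' (equivk_sym Heq) _ _ Hc.
Qed.
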